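(* Let $n$ be a nonnegative integer and $a,c\in\mathbb{C}$ such that all expressions below are defined (no lower parameter zero or a negative integer). Then \[ \left[{}_3F_2\!\left(\left.{a,a-c-n,c \atop \frac{a-n}{2},\frac{1+a-n}{2}}\right| \frac{1}{4}\right)\right]_n =\frac{(1+c-a)_n(1+c)_n}{n!\,(1-a)_n}\,{}_4F_3\!\left(\left.{-n,1+c+n,c,1 \atop \frac{1+c}{2},\frac{2+c}{2},1+c-a}\right| \frac{1}{4}\right). \]
   Context: For $a\in\mathbb{C}$, $(a)_0=1$ and $(a)_k=a(a+1)\cdots(a+k-1)$ for $k\ge1$. The hypergeometric series is ${}_rF_s\!\left(\left.{\alpha_1,\ldots,\alpha_r\atop \beta_1,\ldots,\beta_s}\right|z\right)=\sum_{k\ge0}\frac{(\alpha_1)_k\cdots(\alpha_r)_k}{k!(\beta_1)_k\cdots(\beta_s)_k}z^k$, with no lower parameter zero or a negative integer; it is a finite sum when an upper parameter is $-n$. The bracket $\left[{}_rF_s(\cdots|z)\right]_n$ denotes the sum of the first $n+1$ terms, $\sum_{k=0}^{n}\frac{(\alpha_1)_k\cdots(\alpha_r)_k}{k!(\beta_1)_k\cdots(\beta_s)_k}z^k$. *)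

(* Defs.v *)
From HB Require Import structures.
From mathcomp Require Import all_boot all_order all_algebra.
From mathcomp Require Import complex.
From mathcomp Require Import reals.
Set Implicit Arguments. Unset Strict Implicit. Unset Printing Implicit Defensive.
Import Order.TTheory GRing.Theory Num.Theory.
Local Open Scope ring_scope.

Definition poch {F : pzRingType} (a : F) (k : nat) : F :=
  \prod_(i < k) (a + i%:R).

Definition hypTerm {F : fieldType} (alphas betas : seq F) (z : F) (k : nat) : F :=
  (\prod_(x <- alphas) poch x k) / (k`!%:R * \prod_(b <- betas) poch b k) * z ^+ k.

(* [ rFs(alphas; betas | z) ]_n : the sum of the first n+1 terms. *)
Definition hypTrunc {F : fieldType} (alphas betas : seq F) (z : F) (n : nat) : F :=
  \sum_(k < n.+1) hypTerm alphas betas z k.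

Definition admissible_lower {F : pzRingType} (b : F) : Prop :=
  forall m : nat, b <> - m%:R.

(* Main.v *)
Require Import Defs.
From HB Require Import structures.
From mathcomp Require Import all_boot all_order all_algebra.
From mathcomp Require Import complex.
From mathcomp Require Import reals.
From mathcomp Require Import ring lra.
Import Order.TTheory GRing.Theory Num.Theory.
Local Open Scope ring_scope.
Set Implicit Arguments. Unset Strict Implicit.

Section Poch.
Variable F : comNzRingType.
Implicit Types x y : F.

Lemma poch0 x : poch x 0 = 1.
Proof. by rewrite /poch big_ord0. Qed.

Lemma pochS x k : poch x k.+1 = poch x k * (x + k%:R).
Proof. by rewrite /poch big_ord_recr. Qed.

Lemma pochSl x k : poch x k.+1 = x * poch (x + 1) k.
Proof.
rewrite /poch big_ord_recl addr0; congr (_ * _); apply: eq_bigr => i _.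
by rewrite /= /bump /= add1n -nat1r addrA.
Qed.

Lemma pochD x m k : poch x (m + k) = poch x m * poch (x + m%:R) k.
Proof.
elim: k => [|k IH]; first by rewrite addn0 poch0 mulr1.
by rewrite addnS !pochS IH natrD addrA mulrA.
Qed.

Lemma vandermonde x y m :
  poch (x + y) m = \sum_(i < m.+1) 'C(m, i)%:R * (poch x i * poch y (m - i)).
Proof.
elim: m => [|m IH].
  by rewrite big_ord1 /= bin0 !poch0 !mul1r.
rewrite pochS IH big_distrl /=.
have E : forall i : 'I_m.+1, 'C(m, i)%:R * (poch x i * poch y (m - i)) * (x + y + m%:R)
   = 'C(m, i)%:R * (poch x i.+1 * poch y (m - i))
     + 'C(m, i)%:R * (poch x i * poch y (m.+1 - i)).
  move=> i; have le := ltn_ord i.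
  rewrite (subSn (ltnSE le)) !pochS.
  have -> : (x + y + m%:R) = (x + i%:R) + (y + (m - i)%:R).
    rewrite natrB ?(ltnSE le) //. ring.
  ring.
rewrite (eq_bigr _ (fun i _ => E i)) big_split /=.
have HB : \sum_(i < m.+1) 'C(m, i)%:R * (poch x i * poch y (m.+1 - i))
  = poch y m.+1 + \sum_(i < m.+1) 'C(m, i.+1)%:R * (poch x i.+1 * poch y (m - i)).
  transitivity (\sum_(i < m.+2) 'C(m, i)%:R * (poch x i * poch y (m.+1 - i))).
    by rewrite [RHS]big_ord_recr /= bin_small // mul0r addr0.
  rewrite big_ord_recl /= bin0 subn0 poch0 !mul1r; congr (_ + _).
rewrite HB; symmetry; rewrite big_ord_recl /= bin0 subn0 poch0 !mul1r.
under eq_bigr => i _ do rewrite /bump /= add1n binS natrD mulrDl subSS.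
rewrite big_split /=.
by rewrite addrA addrC.

Qed.

End Poch.
Lemma exch (F : nmodType) n (H : nat -> nat -> F) :
  \sum_(k < n.+1) \sum_(i < (n - k).+1) H k (k + i)%N
  = \sum_(j < n.+1) \sum_(k < j.+1) H k j.
Proof.
have L1 : forall k : 'I_n.+1, \sum_(i < (n - k).+1) H k (k + i)%N
    = \sum_(j < n.+1 | (k <= j)%N) H k j.
  move=> k; transitivity (\sum_(k <= j < n.+1) H k j); last by rewrite big_geq_mkord.
  rewrite (_ : \sum_(k <= j < n.+1) H k j = \sum_(0 + k <= j < n.+1) H k j) // big_addn big_mkord subSn ?(ltnSE (ltn_ord k)) //.
  by apply: eq_bigr => i _; rewrite addnC.
have L2 : forall j : 'I_n.+1, \sum_(k < j.+1) H k j
    = \sum_(k < n.+1 | (k <= j)%N) H k j.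
  move=> j; rewrite (@big_ord_widen_cond _ 0 +%R j.+1 n.+1 xpredT (fun k => H k j) (ltn_ord j)).
  by apply: eq_bigl => k.
rewrite (eq_bigr _ (fun k _ => L1 k)) (eq_bigr _ (fun j _ => L2 j)).
by rewrite (exchange_big_dep xpredT).
Qed.

From mathcomp Require Import zify.

Section Core.
Variable F : numFieldType.
Implicit Types x y b c : F.

Lemma fact_neq0 m : (m`!%:R : F) != 0.
Proof. by rewrite pnatr_eq0 -lt0n fact_gt0. Qed.

Lemma poch_nat m l : poch (m.+1%:R : F) l = (m + l)`!%:R / m`!%:R.
Proof.
elim: l => [|l IH]; first by rewrite poch0 addn0 divff ?fact_neq0.
rewrite pochS IH addnS factS natrM -addSn natrD.
field; exact: fact_neq0.
Qed.

Lemma bin_field m k : (k <= m)%N ->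
  ('C(m, k)%:R : F) = m`!%:R / (k`!%:R * (m - k)`!%:R).
Proof.
move=> le; rewrite -(bin_fact le) !natrM mulfK //.
by rewrite mulf_neq0 ?fact_neq0.
Qed.

Lemma core b c n :
  \sum_(k < n.+1) poch b k * poch c k * poch (b + c + (2 * k)%:R) (n - k) / k`!%:R
  = \sum_(j < n.+1) poch b j / j`!%:R * poch c (n - j)
      * poch (c + (n - j)%:R + (n - j).+1%:R) j.
Proof.
pose H k j := 'C(n - k, j - k)%:R / k`!%:R * poch b j * poch c (n - j + k).
transitivity (\sum_(k < n.+1) \sum_(i < (n - k).+1) H k (k + i)%N).
  apply: eq_bigr => k _.
  have le := ltnSE (ltn_ord k).
  rewrite (_ : b + c + (2 * k)%:R = (b + k%:R) + (c + k%:R)); last first.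
    by rewrite natrM; ring.
  rewrite vandermonde !big_distrr big_distrl /=; apply: eq_bigr => i _.
  have lei := ltnSE (ltn_ord i).
  rewrite /H (_ : (k + i - k = i)%N); last by lia.
  rewrite (_ : (n - (k + i) + k = k + (n - k - i))%N); last by lia.
  rewrite !pochD; ring.
rewrite exch; apply: eq_bigr => j _.
have lej := ltnSE (ltn_ord j).
rewrite vandermonde !big_distrr /=; apply: eq_bigr => k _.
have lek := ltnSE (ltn_ord k).
rewrite /H pochD poch_nat.
rewrite (_ : (n - j + (j - k) = n - k)%N); last by lia.
rewrite !bin_field //; last by lia.
rewrite (_ : (n - k - (j - k) = n - j)%N); last by lia.
field; by rewrite !fact_neq0.
Qed.

End Core.

Section Aux.
Variable F : numFieldType.
Implicit Types x y b c : F.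

Lemma poch_neg x j : poch (- x) j = (-1) ^+ j * poch (x - j%:R + 1) j.
Proof.
elim: j => [|j IH]; first by rewrite !poch0 expr0 mulr1.
rewrite pochS IH pochSl exprS (_ : x - j.+1%:R + 1 + 1 = x - j%:R + 1); last first.
  by rewrite -natr1; ring.
rewrite -natr1; ring.
Qed.

Lemma poch_half x k : poch (x / 2) k * poch ((x + 1) / 2) k * 4%:R ^+ k = poch x (2 * k).
Proof.
elim: k => [|k IH]; first by rewrite !poch0 expr0 !mulr1.
rewrite (_ : (2 * k.+1 = (2 * k).+1.+1)%N); last by lia.
rewrite !pochS -IH exprS -!natr1 natrM.
by field.
Qed.

Lemma poch_nz x : admissible_lower x -> forall j, poch x j != 0.
Proof.
move=> h j; apply/prodf_neq0 => i _.
apply/eqP => e; apply: (h i); by rewrite -(subr0 x) -e; ring.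
Qed.

Lemma adm_double x : admissible_lower (x / 2) -> admissible_lower ((x + 1) / 2) ->
  admissible_lower x.
Proof.
move=> h1 h2 m e.
have := odd_double_half m; rewrite -muln2; move: (m./2) => q.
case: (odd m) => /= em.
  apply: (h2 q); rewrite e -em natrD natrM; by field.
apply: (h1 q); rewrite e -em add0n natrM; by field.
Qed.

Lemma rev_sum (a b c : F) n : a = b + c + n%:R ->
  \sum_(j < n.+1) (-1) ^+ j * poch c j * poch (1 + c + (2 * j)%:R) (n - j)
     * poch (1 + c - a + j%:R) (n - j) / (n - j)`!%:R
  = (-1) ^+ n * \sum_(i < n.+1) poch b i / i`!%:R * poch c (n - i)
      * poch (c + (n - i)%:R + (n - i).+1%:R) i.
Proof.
move=> ea; rewrite big_distrr (reindex_inj rev_ord_inj) /=; apply: eq_bigr => i _.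
have lei := ltnSE (ltn_ord i).
rewrite subSS subKn //.
rewrite (_ : 1 + c + (2 * (n - i))%:R = c + (n - i)%:R + (n - i).+1%:R); last first.
  by rewrite -natr1 natrM; ring.
rewrite (_ : 1 + c - a + (n - i)%:R = - (b + i%:R - 1)); last first.
  by rewrite ea natrB //; ring.
rewrite poch_neg (_ : b + i%:R - 1 - i%:R + 1 = b); last by ring.
have e : (-1) ^+ n = (-1) ^+ (n - i) * (-1) ^+ i :> F by rewrite -exprD subnK.
rewrite e; ring.
Qed.

End Aux.

Lemma main_gen (F : numFieldType) (n : nat) (a c : F)
  (h1 : admissible_lower ((a - n%:R) / 2))
  (h2 : admissible_lower ((1 + a - n%:R) / 2))
  (h3 : admissible_lower ((1 + c) / 2))
  (h4 : admissible_lower ((2 + c) / 2))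
  (h5 : admissible_lower (1 + c - a))
  (h6 : poch (1 - a) n != 0) :
  hypTrunc [:: a; a - c - n%:R; c] [:: (a - n%:R) / 2; (1 + a - n%:R) / 2] (4%:R^-1) n
  = poch (1 + c - a) n * poch (1 + c) n / (n`!%:R * poch (1 - a) n)
    * hypTrunc [:: - n%:R; 1 + c + n%:R; c; 1] [:: (1 + c) / 2; (2 + c) / 2; 1 + c - a]
        (4%:R^-1) n.
Proof.
have e2 : 1 + a - n%:R = (a - n%:R) + 1 by ring.
have e3 : 2 + c = (1 + c) + 1 by ring.
rewrite e2 in h2 *; rewrite e3 in h4 *.
set d := a - n%:R in h1 h2 *.
set b := a - c - n%:R.
have hd := poch_nz (adm_double h1 h2).
have hc := poch_nz (adm_double h3 h4).
have hca := poch_nz h5.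
have hq1 := poch_nz h1; have hq2 := poch_nz h2.
have hq3 := poch_nz h3; have hq4 := poch_nz h4.
have h4n : (4%:R : F) != 0 by rewrite pnatr_eq0.
have LHSeq : hypTrunc [:: a; b; c] [:: d / 2; (d + 1) / 2] 4%:R^-1 n
  = (poch d n)^-1 * \sum_(k < n.+1)
      poch b k * poch c k * poch (b + c + (2 * k)%:R) (n - k) / k`!%:R.
  rewrite /hypTrunc mulr_sumr; apply: eq_bigr => k _.
  have lek := ltnSE (ltn_ord k).
  rewrite /hypTerm !big_cons !big_nil.
  have H := poch_half d k.
  have H2 : poch (b + c + (2 * k)%:R) (n - k) = poch a k * poch d n / poch d (2 * k).
    rewrite (_ : a = d + n%:R); last by rewrite /d; ring.
    rewrite [poch (d + _) k * _]mulrC -pochD (_ : (n + k = 2 * k + (n - k))%N); last by lia.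
    rewrite pochD mulrC mulKf //; congr poch; rewrite /b /d natrM; ring.
  rewrite H2 -H exprVn; field.
  by rewrite fact_neq0 expf_neq0 ?hq1 ?hq2 ?hd.
have RHSeq : poch (1 + c - a) n * poch (1 + c) n / (n`!%:R * poch (1 - a) n)
    * hypTrunc [:: - n%:R; 1 + c + n%:R; c; 1] [:: (1 + c) / 2; (1 + c + 1) / 2; 1 + c - a] 4%:R^-1 n
  = (poch (1 - a) n)^-1 * \sum_(j < n.+1) (-1) ^+ j * poch c j * poch (1 + c + (2 * j)%:R) (n - j)
     * poch (1 + c - a + j%:R) (n - j) / (n - j)`!%:R.
  rewrite /hypTrunc !mulr_sumr; apply: eq_bigr => j _.
  have lej := ltnSE (ltn_ord j).
  rewrite /hypTerm !big_cons !big_nil.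
  have H := poch_half (1 + c) j.
  have E1 : poch (1 + c - a) n = poch (1 + c - a) j * poch (1 + c - a + j%:R) (n - j).
    by rewrite -pochD subnKC.
  have E2 : poch (1 + c + n%:R) j
      = poch (1 + c) (2 * j) * poch (1 + c + (2 * j)%:R) (n - j) / poch (1 + c) n.
    rewrite -pochD (_ : (2 * j + (n - j) = n + j)%N); last by lia.
    by rewrite pochD mulrAC divff ?mul1r.
  have E3 : poch (- n%:R) j = (-1) ^+ j * n`!%:R / (n - j)`!%:R :> F.
    rewrite poch_neg (_ : n%:R - j%:R + 1 = (n - j).+1%:R :> F); last first.
      by rewrite -natr1 natrB.
    by rewrite poch_nat subnK // mulrA.
  have E4 : poch 1 j = j`!%:R :> F.
    by have := @poch_nat F 0 j; rewrite add0n fact0 divr1.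
  rewrite E1 E2 E3 E4 -H exprVn; field.
  by rewrite !fact_neq0 h6 expf_neq0 ?hca ?hq3 ?hq4 ?hc.
rewrite LHSeq RHSeq core (@rev_sum F a b c n); last by rewrite /b; ring.
have E5 : poch (1 - a) n = (-1) ^+ n * poch d n.
  rewrite (_ : 1 - a = - (a - 1)); last by ring.
  by rewrite poch_neg /d; congr (_ * poch _ _); ring.
rewrite E5; field.
by rewrite hd expf_neq0 // oppr_eq0 oner_eq0.
Qed.

Unset Implicit Arguments.
Local Open Scope complex_scope.

Theorem mainTheorem15 (R : realType) (n : nat) (a c : R[i])
  (h1 : admissible_lower ((a - n%:R) / 2))
  (h2 : admissible_lower ((1 + a - n%:R) / 2))
  (h3 : admissible_lower ((1 + c) / 2))
  (h4 : admissible_lower ((2 + c) / 2))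
  (h5 : admissible_lower (1 + c - a))
  (h6 : poch (1 - a) n != 0) :
  hypTrunc [:: a; a - c - n%:R; c] [:: (a - n%:R) / 2; (1 + a - n%:R) / 2] (4%:R^-1) n
  = poch (1 + c - a) n * poch (1 + c) n / (n`!%:R * poch (1 - a) n)
    * hypTrunc [:: - n%:R; 1 + c + n%:R; c; 1] [:: (1 + c) / 2; (2 + c) / 2; 1 + c - a]
        (4%:R^-1) n.
Proof. exact: main_gen. Qed.
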